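(* Let ${\rm d}\ge4$ and consider a static spherically symmetric charged fluid with metric $ds^2=-W(r)^2dt^2+U(r)^2dr^2+r^2d\Omega_{{\rm d}-2}$ for $r\le\mathfrak a$, in which $W^2=a(-\epsilon\sqrt{G_{\rm d}}\phi+b)^2+c$ with constants $a>0,b,c$ and $\epsilon\in\{1,-1\}$, joined at $r=\mathfrak a$ to the exterior Tangherlini (Reissner–Nordström) metric $ds^2=-f(r)dt^2+f(r)^{-1}dr^2+r^2d\Omega_{{\rm d}-2}$, $f(r)=1-\frac{2G_{\rm d}}{{\rm d}-3}\frac{m}{r^{{\rm d}-3}}+\frac{G_{\rm d}}{({\rm d}-3)^2}\frac{q^2}{r^{2({\rm d}-3)}}$, with $q\neq0$, such that $W(\mathfrak a)^2=1/U(\mathfrak a)^2=f(\mathfrak a)$, $W'(\mathfrak a)=f'(\mathfrak a)/(2W(\mathfrak a))$, and the interior charge function $Q(r)=r^{{\rm d}-2}\phi'(r)/(W U)$ satisfies $Q(\mathfrak a)=q$. Then $ac=a\left[1-\frac{G_{\rm d}m^2}{q^2}\right]+(a-1)\left(\frac{m}{q}-\frac{q}{({\rm d}-3)\mathfrak a^{{\rm d}-3}}\right)^2G_{\rm d}$.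
   Context: $d\Omega_{{\rm d}-2}$ is the round metric on the unit sphere $\mathbf S^{{\rm d}-2}$; $G_{\rm d}>0$ is the ${\rm d}$-dimensional gravitational constant; $\phi(r)$ is the electrostatic potential ($A_\mu=-\phi\delta^0_\mu$); primes denote $d/dr$. The function $Q(r)$ is the charge enclosed within radius $r$ obtained by integrating the Maxwell equation, and $m,q$ are the mass and charge parameters of the exterior solution. *)

(* Defs.v *)
From Stdlib Require Import Reals Lra.
Open Scope R_scope.

Definition tangherlini_f (d : nat) (G m q : R) (r : R) : R :=
  1 - 2 * G / INR (d - 3) * m / r ^ (d - 3)
    + G / (INR (d - 3)) ^ 2 * q ^ 2 / r ^ (2 * (d - 3)).

Definition left_derivative (g : R -> R) (x l : R) : Prop :=
  forall eps : R, 0 < eps ->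
    exists delta : R, 0 < delta /\
      forall h : R, - delta < h < 0 ->
        Rabs ((g (x + h) - g x) / h - l) < eps.

(* Main.v *)
Require Import Defs.
From Stdlib Require Import Reals Lra Lia.
Open Scope R_scope.

Lemma ld_lim g x l : left_derivative g x l ->
  limit1_in (fun h => (g (x + h) - g x) / h) (fun h => h < 0) l 0.
Proof.
  intros H e He. destruct (H e He) as [dl [Hd Hh]]. exists dl; split; auto.
  intros h [Hneg Hdist]. simpl in *. unfold Rdist in *.
  apply Hh. rewrite Rminus_0_r in Hdist. apply Rabs_def2 in Hdist. lra.
Qed.

Lemma lim_ext f g D l x0 : limit1_in f D l x0 -> (forall x, D x -> f x = g x) ->
  limit1_in g D l x0.
Proof.
  intros H E e He. destruct (H e He) as [al [Ha Hh]]. exists al; split; auto.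
  intros y [Dy Hy]. rewrite <- E by auto. apply Hh; auto.
Qed.

Lemma lim_restr f D D' l x0 : limit1_in f D l x0 -> (forall x, D' x -> D x) ->
  limit1_in f D' l x0.
Proof.
  intros H E e He. destruct (H e He) as [al [Ha Hh]]. exists al; split; auto.
  intros y [Dy Hy]. apply Hh; auto.
Qed.

Lemma lim_id D : limit1_in (fun h => h) D 0 0.
Proof. intros e He. exists e; split; auto. intros y [_ Hy]. exact Hy. Qed.

Lemma lim_const D c : limit1_in (fun _ => c) D c 0.
Proof. exact (limit_free (fun _ => c) D 0 0). Qed.

Lemma sq_ld g x l : left_derivative g x l ->
  limit1_in (fun h => (g (x + h) ^ 2 - g x ^ 2) / h) (fun h => h < 0) (2 * g x * l) 0.
Proof.
  intros H. apply ld_lim in H.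
  set (q := fun h => (g (x + h) - g x) / h) in H.
  assert (L := limit_mul _ _ _ _ _ _ H (limit_plus _ _ _ _ _ _ (lim_const _ (2 * g x))
     (limit_mul _ _ _ _ _ _ (lim_id (fun h => h < 0)) H))).
  replace (2 * g x * l) with (l * (2 * g x + 0 * l)) by ring.
  apply (lim_ext _ _ _ _ _ L). intros h Hh. unfold q. field. lra.
Qed.

Lemma quad_ld g x l A B : left_derivative g x l ->
  limit1_in (fun h => ((A * g (x + h) + B) ^ 2 - (A * g x + B) ^ 2) / h) (fun h => h < 0)
    (2 * (A * g x + B) * (A * l)) 0.
Proof.
  intros H. apply ld_lim in H.
  set (q := fun h => (g (x + h) - g x) / h) in H.
  assert (L := limit_mul _ _ _ _ _ _ H (limit_plus _ _ _ _ _ _ (lim_const _ (2 * A * (A * g x + B)))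
     (limit_mul _ _ _ _ _ _ (lim_id (fun h => h < 0)) (limit_mul _ _ _ _ _ _ (lim_const _ (A*A)) H)))).
  replace (2 * (A * g x + B) * (A * l)) with (l * (2 * A * (A * g x + B) + 0 * (A * A * l))) by ring.
  apply (lim_ext _ _ _ _ _ L). intros h Hh. unfold q. field. lra.
Qed.

Lemma dinv C k x : x <> 0 ->
  derivable_pt_lim (fun r => C / r ^ k) x (- (INR k * x ^ Nat.pred k * C) / (x ^ k) ^ 2).
Proof.
  intros Hx.
  assert (H := derivable_pt_lim_div (fun _ => C) (fun y => y ^ k) x 0 _
     (derivable_pt_lim_const C x) (derivable_pt_lim_pow x k) (pow_nonzero x k Hx)).
  unfold Rsqr in H. replace (- (INR k * x ^ Nat.pred k * C) / (x ^ k) ^ 2) with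
    ((0 * x ^ k - INR k * x ^ Nat.pred k * C) / (x ^ k * x ^ k)) by (field; apply pow_nonzero; auto).
  apply (derivable_pt_lim_ext _ _ _ _ (fun z => eq_refl) H).
Qed.
Theorem mainTheorem15
  (d : nat) (G a b c eps m q fa : R)
  (W U phi : R -> R) (dW dphi fp : R)
  (hd : (4 <= d)%nat) (hG : 0 < G) (ha : 0 < a)
  (heps : eps = 1 \/ eps = -1) (hq : q <> 0) (hfa : 0 < fa)
  (* interior metric functions are positive on (0, fa] *)
  (hpos : forall r, 0 < r <= fa -> 0 < W r /\ 0 < U r)
  (* interior relation W^2 = a(-eps sqrt G phi + b)^2 + c for r <= fa *)
  (hW2 : forall r, 0 < r <= fa ->
           (W r) ^ 2 = a * (- eps * sqrt G * phi r + b) ^ 2 + c)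
  (* W'(fa) and phi'(fa) are the (left) derivatives of the interior solution *)
  (hdW : left_derivative W fa dW)
  (hdphi : left_derivative phi fa dphi)
  (* f'(fa) *)
  (hfp : derivable_pt_lim (tangherlini_f d G m q) fa fp)
  (* junction conditions *)
  (hmatchW : (W fa) ^ 2 = tangherlini_f d G m q fa)
  (hmatchU : 1 / (U fa) ^ 2 = tangherlini_f d G m q fa)
  (hmatchdW : dW = fp / (2 * W fa))
  (* charge: Q(fa) = fa^(d-2) phi'(fa) / (W U) = q *)
  (hQ : fa ^ (d - 2) * dphi / (W fa * U fa) = q) :
  a * c = a * (1 - G * m ^ 2 / q ^ 2)
          + (a - 1) * (m / q - q / (INR (d - 3) * fa ^ (d - 3))) ^ 2 * G.
Proof.
  destruct (hpos fa) as [HW HU]; [lra|].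
  set (A := - eps * sqrt G).
  assert (Hlim : 2 * W fa * dW = a * (2 * (A * phi fa + b) * (A * dphi))).
  { assert (L1 := sq_ld _ _ _ hdW). assert (L2 := quad_ld _ _ _ A b hdphi).
    apply (limit_mul _ _ _ _ _ _ (lim_const _ a)) in L2.
    set (D' := fun h => -fa < h < 0).
    apply (lim_restr _ _ D') in L1; [|unfold D'; intros; lra].
    apply (lim_restr _ _ D') in L2; [|unfold D'; intros; lra].
    apply (single_limit (fun h => (W (fa + h) ^ 2 - W fa ^ 2) / h) D' _ _ 0).
    - intros al Hal. exists (- Rmin fa al / 2). unfold D', Rdist.
      assert (0 < Rmin fa al) by (apply Rmin_glb_lt; lra).
      assert (Rmin fa al <= fa) by apply Rmin_l. assert (Rmin fa al <= al) by apply Rmin_r.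
      split; [lra|]. rewrite Rminus_0_r, Rabs_left by lra. lra.
    - exact L1.
    - apply (lim_ext _ _ _ _ _ L2). unfold D'. intros h Hh.
      rewrite !hW2 by lra. unfold A. field. lra. }
  destruct (Nat.le_exists_sub 4 d hd) as [k [Hk _]]. subst d.
  replace (k + 4 - 3)%nat with (S k) in * by lia.
  replace (k + 4 - 2)%nat with (S (S k)) in * by lia.
  set (N := INR (S k)) in *.
  assert (HN : 0 < N) by (unfold N; apply lt_0_INR; lia).
  set (x := fa ^ S k).
  assert (Hx : 0 < x) by (apply pow_lt; lra).
  assert (Hfp : fp = 2 * G / fa * (m / x - q ^ 2 / (N * x ^ 2))).
  { apply (uniqueness_limite _ fa _ _ hfp).
    assert (Hfa0 : fa <> 0) by lra.
    assert (H := derivable_pt_lim_plus _ _ _ _ _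
      (derivable_pt_lim_minus _ _ _ _ _ (derivable_pt_lim_const 1 fa)
          (dinv (2 * G / N * m) (S k) fa Hfa0))
      (dinv (G / N ^ 2 * q ^ 2) (2 * S k) fa Hfa0)).
    replace (2 * G / fa * (m / x - q ^ 2 / (N * x ^ 2))) with
      (0 - - (INR (S k) * fa ^ Nat.pred (S k) * (2 * G / N * m)) / (fa ^ S k) ^ 2 +
       - (INR (2 * S k) * fa ^ Nat.pred (2 * S k) * (G / N ^ 2 * q ^ 2)) / (fa ^ (2 * S k)) ^ 2).
    2:{ replace (INR (2 * S k)) with (2 * N) by (unfold N; rewrite mult_INR; simpl; ring).
        replace (Nat.pred (2 * S k)) with (k + S k)%nat by lia.
        rewrite pow_add. replace (2 * S k)%nat with (S k + S k)%nat by lia. rewrite pow_add.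
        fold x. simpl Nat.pred.
        assert (Hxk : x = fa * fa ^ k) by reflexivity. rewrite Hxk.
        assert (0 < fa ^ k) by (apply pow_lt; lra).
        change (INR (S k)) with N. field. repeat split; lra. }
    refine (derivable_pt_lim_ext _ _ _ _ _ H). intro z.
    unfold tangherlini_f, plus_fct, minus_fct, fct_cte.
    replace (k + 4 - 3)%nat with (S k) by lia. reflexivity. }
  assert (Ex : fa ^ S k = x) by reflexivity. assert (EN : INR (S k) = N) by reflexivity. clearbody x N.
  assert (HWU : W fa * U fa = 1).
  { rewrite <- hmatchW in hmatchU.
    assert (E : (W fa * U fa) ^ 2 = 1).
    { rewrite Rpow_mult_distr, <- hmatchU. field. lra. }
    assert (0 < W fa * U fa) by (apply Rmult_lt_0_compat; lra). nra. }
  assert (Hdphi : dphi = q / (fa * x)).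
  { rewrite HWU, Rdiv_1_r in hQ. rewrite <- hQ, <- Ex. simpl. field. split.
    apply pow_nonzero; lra. lra. }
  set (Y := A * phi fa + b).
  assert (Hc : c = W fa ^ 2 - a * Y ^ 2).
  { rewrite (hW2 fa) by lra. unfold Y, A. ring. }
  assert (HF : W fa ^ 2 = 1 - 2 * G / N * m / x + G / N ^ 2 * q ^ 2 / x ^ 2).
  { rewrite hmatchW. unfold tangherlini_f. replace (k + 4 - 3)%nat with (S k) by lia.
    rewrite EN. replace (2 * S k)%nat with (S k + S k)%nat by lia. rewrite pow_add, Ex.
    simpl pow. rewrite !Rmult_1_r. reflexivity. }
  assert (HA2 : A ^ 2 = G).
  { unfold A. replace ((- eps * sqrt G) ^ 2) with (eps ^ 2 * (sqrt G * sqrt G)) by ring.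
    rewrite sqrt_sqrt by lra. destruct heps; subst; ring. }
  assert (EY : A * phi fa + b = Y) by reflexivity. clearbody Y A.
  assert (Hkey : G * (m - q ^ 2 / (N * x)) = a * Y * A * q).
  { rewrite hmatchdW, Hfp, Hdphi in Hlim. rewrite EY in Hlim.
    apply (Rmult_eq_reg_l (2 / (fa * x))); [|apply Rgt_not_eq; apply Rdiv_lt_0_compat; [lra|]; apply Rmult_lt_0_compat; lra].
    transitivity (2 * W fa * ((2 * G / fa * (m / x - q ^ 2 / (N * x ^ 2))) / (2 * W fa))).
    field. repeat split; lra.
    rewrite Hlim. field. repeat split; lra. }
  assert (Hsq : a ^ 2 * Y ^ 2 = G * (m / q - q / (N * x)) ^ 2).
  { apply (Rmult_eq_reg_l (G * q ^ 2)); [|apply Rmult_integral_contrapositive_currified; [lra|]; apply pow_nonzero; exact hq].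
    transitivity ((a * Y * A * q) ^ 2).
    - replace ((a * Y * A * q) ^ 2) with (a ^ 2 * Y ^ 2 * A ^ 2 * q ^ 2) by ring.
      rewrite HA2. ring.
    - rewrite <- Hkey. field. split; lra. }
  rewrite Hc.
  replace (a * (W fa ^ 2 - a * Y ^ 2)) with (a * W fa ^ 2 - a ^ 2 * Y ^ 2) by ring.
  rewrite Hsq, HF. field. repeat split; lra.
Qed.
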